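(* Let $0<\Gamma_0\le1$ and let $\tau\subset\mathbb R^m$ be a $\Gamma_0$-flake. Then for every vertex $p\in\tau$, $$D(p,\tau)<\frac{2L(\tau)^2\,\Gamma_0}{\ell(\tau)}.$$
   Context: A simplex is a nonempty finite subset $\sigma\subset\mathbb R^m$ (vertices need not be affinely independent); $\dim\sigma=|\sigma|-1$; faces are nonempty subsets. For $p\in\sigma$, $\sigma_p=\sigma\setminus\{p\}$. $L(\sigma)$ and $\ell(\sigma)$ are the largest and smallest distances between distinct vertices (both $0$ for a $0$-simplex). The altitude of $p$ in $\sigma$ is $D(p,\sigma)=d(p,\mathrm{aff}(\sigma_p))$. The thickness of a $j$-simplex is $\Upsilon(\sigma)=1$ if $j=0$ and $\min_{p\in\sigma}D(p,\sigma)/(jL(\sigma))$ otherwise. $\sigma$ is $\Gamma_0$-good if every $j$-dimensional face $\sigma^j\subseteq\sigma$ ($0\le j\le\dim\sigma$) satisfies $\Upsilon(\sigma^j)\ge\Gamma_0^j$; it is $\Gamma_0$-bad otherwise. A $\Gamma_0$-flake is a $\Gamma_0$-bad simplex all of whose proper faces are $\Gamma_0$-good. *)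

(* Defs.v *)
From Stdlib Require Import Reals Lra List ClassicalEpsilon.
Import ListNotations.
Open Scope R_scope.

(* A point of R^m is a list of m reals; coordinate k is [nth k v 0]. *)
Definition point := list R.

Definition pt_eq_dec : forall x y : point, {x = y} + {x <> y} :=
  list_eq_dec Req_EM_T.

Definition rsum (n : nat) (f : nat -> R) : R :=
  fold_right Rplus 0 (map f (seq 0 n)).

Definition dist (m : nat) (x y : point) : R :=
  sqrt (rsum m (fun k => (nth k x 0 - nth k y 0) ^ 2)).

Definition Rinf (E : R -> Prop) : R :=
  epsilon (inhabits 0)
    (fun r => (forall x, E x -> r <= x) /\
              (forall b, (forall x, E x -> b <= x) -> b <= r)).

Definition aff (m : nat) (S : list point) (q : point) : Prop :=
  length q = m /\
  exists c : nat -> R, rsum (length S) c = 1 /\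
    forall k, (k < m)%nat ->
      nth k q 0 = rsum (length S) (fun i => c i * nth k (nth i S nil) 0).

Definition dist_set (m : nat) (p : point) (E : point -> Prop) : R :=
  Rinf (fun d => exists q, E q /\ d = dist m p q).

(* A simplex: a nonempty finite set of points of R^m (a duplicate-free list). *)
Definition simplex (m : nat) (s : list point) : Prop :=
  s <> nil /\ NoDup s /\ Forall (fun v => length v = m) s.

Definition face (t s : list point) : Prop :=
  t <> nil /\ NoDup t /\ incl t s.

Definition drop_vertex (p : point) (s : list point) : list point :=
  remove pt_eq_dec p s.

Definition altitude (m : nat) (p : point) (s : list point) : R :=
  dist_set m p (aff m (drop_vertex p s)).

Definition pair_dists (m : nat) (s : list point) : list R :=
  map (fun pq => dist m (fst pq) (snd pq))
      (filter (fun pq => if pt_eq_dec (fst pq) (snd pq) then false else true)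
              (list_prod s s)).

Definition Rmaxl (l : list R) : R :=
  match l with nil => 0 | x :: t => fold_right Rmax x t end.
Definition Rminl (l : list R) : R :=
  match l with nil => 0 | x :: t => fold_right Rmin x t end.

(* L(sigma), l(sigma): largest / smallest distance between distinct vertices
   (both 0 for a 0-simplex) *)
Definition Lmax (m : nat) (s : list point) : R := Rmaxl (pair_dists m s).
Definition lmin (m : nat) (s : list point) : R := Rminl (pair_dists m s).

Definition sdim (s : list point) : nat := (length s - 1)%nat.

Definition thickness (m : nat) (s : list point) : R :=
  if Nat.eqb (sdim s) 0 then 1
  else Rminl (map (fun p => altitude m p s) s) / (INR (sdim s) * Lmax m s).

Definition good (m : nat) (G0 : R) (s : list point) : Prop :=
  forall t, face t s -> thickness m t >= G0 ^ (sdim t).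

Definition bad (m : nat) (G0 : R) (s : list point) : Prop := ~ good m G0 s.

Definition flake (m : nat) (G0 : R) (s : list point) : Prop :=
  bad m G0 s /\
  forall t, face t s -> (length t < length s)%nat -> good m G0 t.

(* Main.v *)
From Stdlib Require Import Reals List Lra Lia ClassicalEpsilon Classical.
Require Import Defs.
Import ListNotations.
Open Scope R_scope.


Lemma fold_plus_acc (l : list R) (a : R) :
  fold_right Rplus a l = fold_right Rplus 0 l + a.
Proof. induction l; simpl; [lra|rewrite IHl; lra]. Qed.

Lemma rsum_0 f : rsum 0 f = 0.
Proof. reflexivity. Qed.

Lemma rsum_S n f : rsum (S n) f = rsum n f + f n.
Proof.
  unfold rsum. rewrite seq_S, map_app, fold_right_app. simpl.
  rewrite fold_plus_acc. lra.
Qed.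

Lemma rsum_ext n f g : (forall k, (k < n)%nat -> f k = g k) -> rsum n f = rsum n g.
Proof.
  induction n; intros H; [reflexivity|].
  rewrite !rsum_S, IHn by (intros; apply H; lia). rewrite H by lia. reflexivity.
Qed.

Lemma rsum_plus n f g : rsum n (fun k => f k + g k) = rsum n f + rsum n g.
Proof. induction n; [simpl; unfold rsum; simpl; lra|rewrite !rsum_S, IHn; lra]. Qed.

Lemma rsum_scal n c f : rsum n (fun k => c * f k) = c * rsum n f.
Proof. induction n; [unfold rsum; simpl; lra|rewrite !rsum_S, IHn; lra]. Qed.

Lemma rsum_zero n : rsum n (fun _ => 0) = 0.
Proof. induction n; [reflexivity|rewrite rsum_S, IHn; lra]. Qed.

Lemma rsum_nonneg n f : (forall k, (k < n)%nat -> 0 <= f k) -> 0 <= rsum n f.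
Proof.
  induction n; intros H; [unfold rsum; simpl; lra|].
  rewrite rsum_S. assert (0 <= f n) by (apply H; lia).
  assert (0 <= rsum n f) by (apply IHn; intros; apply H; lia). lra.
Qed.

Lemma rsum_zero_each n f : (forall k, (k < n)%nat -> 0 <= f k) -> rsum n f = 0 ->
  forall k, (k < n)%nat -> f k = 0.
Proof.
  induction n; intros H H0 k Hk; [lia|].
  rewrite rsum_S in H0.
  assert (0 <= f n) by (apply H; lia).
  assert (0 <= rsum n f) by (apply rsum_nonneg; intros; apply H; lia).
  destruct (Nat.eq_dec k n).
  - subst. lra.
  - apply IHn; try lia; try lra. intros; apply H; lia.
Qed.

Lemma rsum_shift n f : rsum (S n) f = f 0%nat + rsum n (fun i => f (S i)).
Proof.
  induction n.
  - rewrite rsum_S. unfold rsum; simpl. lra.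
  - rewrite rsum_S, IHn, (rsum_S n). lra.
Qed.

Lemma rsum_ind n i g : (i < n)%nat ->
  rsum n (fun j => (if Nat.eq_dec j i then 1 else 0) * g j) = g i.
Proof.
  induction n; intros Hi; [lia|].
  rewrite rsum_S. destruct (Nat.eq_dec n i).
  - subst. rewrite (rsum_ext _ _ (fun _ => 0)), rsum_zero. lra.
    intros k Hk. destruct (Nat.eq_dec k i); [lia|lra].
  - rewrite IHn by lia. lra.
Qed.

Lemma rsum_ind1 n i : (i < n)%nat ->
  rsum n (fun j => if Nat.eq_dec j i then 1 else 0) = 1.
Proof.
  intros Hi. transitivity (rsum n (fun j => (if Nat.eq_dec j i then 1 else 0) * (fun _ => 1) j)).
  - apply rsum_ext; intros; lra.
  - apply rsum_ind; auto.
Qed.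

Lemma Rinf_spec (E : R -> Prop) : (exists x, E x) -> (forall x, E x -> 0 <= x) ->
  (forall x, E x -> Rinf E <= x) /\ (forall b, (forall x, E x -> b <= x) -> b <= Rinf E).
Proof.
  intros Hne Hlb. unfold Rinf. apply epsilon_spec.
  destruct (completeness (fun y => E (- y))) as [M [HM1 HM2]].
  - exists 0. intros y Hy. apply Hlb in Hy. lra.
  - destruct Hne as [x Hx]. exists (- x). rewrite Ropp_involutive. auto.
  - exists (- M). split.
    + intros x Hx. assert (- x <= M) by (apply HM1; rewrite Ropp_involutive; auto). lra.
    + intros b Hb. assert (M <= - b).
      { apply HM2. intros y Hy. apply Hb in Hy. lra. }
      lra.
Qed.

Lemma dist_nonneg m x y : 0 <= dist m x y.
Proof. apply sqrt_pos. Qed.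

Lemma dset_le m p (E : point -> Prop) x : E x -> dist_set m p E <= dist m p x.
Proof.
  intros Hx. unfold dist_set.
  destruct (Rinf_spec (fun d => exists q, E q /\ d = dist m p q)) as [H1 _].
  - exists (dist m p x). eauto.
  - intros d [q [_ ->]]. apply dist_nonneg.
  - apply H1. eauto.
Qed.

Lemma dset_ge m p (E : point -> Prop) b : (exists x, E x) ->
  (forall x, E x -> b <= dist m p x) -> b <= dist_set m p E.
Proof.
  intros [x Hx] Hb. unfold dist_set.
  destruct (Rinf_spec (fun d => exists q, E q /\ d = dist m p q)) as [_ H2].
  - exists (dist m p x). eauto.
  - intros d [q [_ ->]]. apply dist_nonneg.
  - apply H2. intros d [q [Hq ->]]. auto.
Qed.

Lemma dset_nonneg m p (E : point -> Prop) : (exists x, E x) -> 0 <= dist_set m p E.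
Proof. intros H. apply dset_ge; auto. intros; apply dist_nonneg. Qed.


Definition vec (v : point) : nat -> R := fun k => nth k v 0.
Definition ip (m : nat) (u v : nat -> R) : R := rsum m (fun k => u k * v k).
Definition inA (m : nat) (S : list point) (f : nat -> R) : Prop :=
  exists c : nat -> R, rsum (length S) c = 1 /\
    forall k, (k < m)%nat -> f k = rsum (length S) (fun i => c i * nth k (nth i S nil) 0).

Lemma aff_inA m S q : aff m S q <-> (length q = m /\ inA m S (vec q)).
Proof. unfold aff, inA, vec. tauto. Qed.

Lemma rsum_minus n f g : rsum n (fun k => f k - g k) = rsum n f - rsum n g.
Proof.
  rewrite (rsum_ext _ _ (fun k => f k + (-1) * g k)) by (intros; ring).
  rewrite rsum_plus, rsum_scal. ring.
Qed.

Lemma dist_ip m x y : dist m x y =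
  sqrt (ip m (fun k => vec x k - vec y k) (fun k => vec x k - vec y k)).
Proof. unfold dist, ip, vec. f_equal. apply rsum_ext. intros; ring. Qed.

Lemma ip_ext m u u' v v' : (forall k, (k < m)%nat -> u k = u' k) ->
  (forall k, (k < m)%nat -> v k = v' k) -> ip m u v = ip m u' v'.
Proof. intros H1 H2. unfold ip. apply rsum_ext. intros. rewrite H1, H2 by auto. auto. Qed.

Lemma ip4 m u d w e a b :
  ip m (fun k => u k + a * d k) (fun k => w k + b * e k) =
  ip m u w + b * ip m u e + a * ip m d w + a * b * ip m d e.
Proof.
  unfold ip.
  rewrite (rsum_ext _ _ (fun k => (u k * w k + b * (u k * e k)) + (a * (d k * w k) + (a * b) * (d k * e k))))
    by (intros; ring).
  rewrite !rsum_plus, !rsum_scal. ring.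
Qed.

Lemma ip_sub_r m u v w : ip m u (fun k => v k - w k) = ip m u v - ip m u w.
Proof.
  unfold ip. rewrite <- rsum_minus. apply rsum_ext; intros; ring.
Qed.

Lemma ip_sub_l m u v w : ip m (fun k => v k - w k) u = ip m v u - ip m w u.
Proof.
  unfold ip. rewrite <- rsum_minus. apply rsum_ext; intros; ring.
Qed.

Lemma ip_sym m u v : ip m u v = ip m v u.
Proof. unfold ip. apply rsum_ext; intros; ring. Qed.

Lemma ip_nonneg m u : 0 <= ip m u u.
Proof. unfold ip. apply rsum_nonneg. intros. nra. Qed.

Lemma ip_zero_r m u d : (forall k, (k < m)%nat -> d k = 0) -> ip m u d = 0.
Proof.
  intros H. unfold ip. rewrite (rsum_ext _ _ (fun _ => 0)). apply rsum_zero.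
  intros k Hk. rewrite H by auto. ring.
Qed.

Lemma ip_self_zero m d : ip m d d = 0 -> forall k, (k < m)%nat -> d k = 0.
Proof.
  intros H k Hk. unfold ip in H.
  assert (d k * d k = 0).
  { apply (rsum_zero_each m (fun k => d k * d k)); auto. intros; nra. }
  nra.
Qed.

Lemma inA_ext m S f g : inA m S f -> (forall k, (k < m)%nat -> f k = g k) -> inA m S g.
Proof.
  intros [c [H1 H2]] H. exists c. split; auto. intros k Hk. rewrite <- H by auto. auto.
Qed.

Lemma inA_aff m S x y z t : inA m S x -> inA m S y -> inA m S z ->
  inA m S (fun k => x k + t * (y k - z k)).
Proof.
  intros [cx [Hx1 Hx2]] [cy [Hy1 Hy2]] [cz [Hz1 Hz2]].
  exists (fun i => cx i + t * (cy i - cz i)). split.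
  - rewrite rsum_plus, rsum_scal, rsum_minus. rewrite Hx1, Hy1, Hz1. ring.
  - intros k Hk. rewrite Hx2, Hy2, Hz2 by auto.
    rewrite <- rsum_minus, <- rsum_scal, <- rsum_plus.
    apply rsum_ext. intros. ring.
Qed.

Lemma inA_vert m S v : In v S -> inA m S (vec v).
Proof.
  intros Hv. destruct (In_nth S v nil Hv) as [i [Hi Hiv]].
  exists (fun j => if Nat.eq_dec j i then 1 else 0). split.
  - apply rsum_ind1; auto.
  - intros k Hk. rewrite (rsum_ind (length S) i (fun j => nth k (nth j S nil) 0)) by auto.
    rewrite Hiv. reflexivity.
Qed.

Lemma span_sub m S (E : (nat -> R) -> Prop) :
  S <> nil ->
  (forall f g, E f -> (forall k, (k < m)%nat -> f k = g k) -> E g) ->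
  (forall x y z t, E x -> E y -> E z -> E (fun k => x k + t * (y k - z k))) ->
  (forall v, In v S -> E (vec v)) ->
  forall f, inA m S f -> E f.
Proof.
  intros Hne Hext Haff Hv f [c [Hc1 Hc2]].
  destruct S as [|v0 S']; [congruence|].
  set (S := v0 :: S') in *.
  assert (Hj : forall j, (j <= length S)%nat ->
    E (fun k => vec v0 k + rsum j (fun i => c i * (nth k (nth i S nil) 0 - vec v0 k)))).
  { induction j; intros Hj.
    - apply (Hext (vec v0)). apply Hv. simpl; auto. intros. rewrite rsum_0. ring.
    - assert (Hj1 : (j <= length S)%nat) by lia.
      assert (Hj2 : (j < length S)%nat) by lia.
      apply (Hext _ _ (Haff _ (vec (nth j S nil)) (vec v0) (c j) (IHj Hj1)
                (Hv _ (nth_In _ _ Hj2)) (Hv v0 (or_introl eq_refl)))).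
      intros k Hk. rewrite rsum_S. cbv beta. unfold vec. ring. }
  apply (Hext _ _ (Hj (length S) (le_n _))).
  intros k Hk. rewrite Hc2 by auto.
  rewrite (rsum_ext _ _ (fun i => c i * nth k (nth i S nil) 0 - vec v0 k * c i)) by (intros; ring).
  rewrite rsum_minus, rsum_scal, Hc1. ring.
Qed.

Lemma proj_ex m S : S <> nil -> forall z, exists y, inA m S y /\
  forall a, inA m S a -> ip m (fun k => z k - y k) (fun k => a k - y k) = 0.
Proof.
  induction S as [|w S' IH]; intros Hne z; [congruence|].
  destruct S' as [|v S''].
  - exists (vec w). split. apply inA_vert. simpl; auto.
    intros a [c [Hc1 Hc2]]. apply ip_zero_r. intros k Hk.
    simpl length in Hc1, Hc2. rewrite rsum_S, rsum_0 in Hc1.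
    assert (Hc0 : c O = 1) by lra.
    rewrite Hc2, rsum_S, rsum_0 by auto. simpl. unfold vec. rewrite Hc0. ring.
  - set (S' := v :: S'') in *.
    assert (HS' : S' <> nil) by discriminate.
    destruct (IH HS' (vec w)) as [yw [Hyw Hortw]].
    destruct (IH HS' z) as [yz [Hyz Hortz]].
    set (d := fun k => vec w k - yw k).
    set (u := fun k => z k - yz k).
    set (s := ip m u d / ip m d d).
    assert (Hs : ip m u d - s * ip m d d = 0).
    { destruct (Req_EM_T (ip m d d) 0) as [H0|H0].
      - rewrite H0, ip_zero_r. ring. apply ip_self_zero; auto.
      - unfold s. field. auto. }
    exists (fun k => yz k + s * d k). split.
    + destruct Hyz as [cz [Hz1 Hz2]]. destruct Hyw as [ce [He1 He2]].
      exists (fun i => match i with O => s | S i => cz i - s * ce i end).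
      split.
      * change (length (w :: S')) with (S (length S')). rewrite rsum_shift.
        rewrite rsum_minus, rsum_scal, Hz1, He1. ring.
      * intros k Hk. change (length (w :: S')) with (S (length S')). rewrite rsum_shift.
        simpl nth at 1.
        rewrite (rsum_ext _ _ (fun i => cz i * nth k (nth i S' nil) 0 - s * (ce i * nth k (nth i S' nil) 0)))
          by (intros; simpl; ring).
        rewrite rsum_minus, rsum_scal, <- Hz2, <- He2 by auto.
        unfold d, vec. ring.
    + intros a [c [Hc1 Hc2]].
      set (b := fun k => a k - c O * d k).
      assert (Hb : inA m S' b).
      { destruct Hyw as [ce [He1 He2]].
        exists (fun i => c (S i) + c O * ce i). split.
        - change (length (w :: S')) with (S (length S')) in Hc1. rewrite rsum_shift in Hc1.
          rewrite rsum_plus, rsum_scal, He1. lra.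
        - intros k Hk. unfold b. rewrite Hc2 by auto.
          change (length (w :: S')) with (S (length S')). rewrite rsum_shift.
          unfold d. rewrite He2 by auto.
          rewrite (rsum_ext _ (fun i => (c (S i) + c O * ce i) * nth k (nth i S' nil) 0) (fun i => c (S i) * nth k (nth i S' nil) 0 + c O * (ce i * nth k (nth i S' nil) 0)))
            by (intros; ring).
          rewrite rsum_plus, rsum_scal. unfold vec. simpl. ring. }
      rewrite (ip_ext m _ (fun k => u k + (- s) * d k) _ (fun k => (b k - yz k) + (c O - s) * d k)).
      2: { intros; unfold u; ring. }
      2: { intros; unfold b; ring. }
      rewrite ip4.
      assert (H1 : ip m u (fun k => b k - yz k) = 0) by (apply Hortz; auto).
      assert (H2 : ip m d (fun k => b k - yz k) = 0).
      { rewrite (ip_ext m d d _ (fun k => (b k - yw k) - (yz k - yw k))) by (intros; ring).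
        rewrite ip_sub_r. unfold d. rewrite (Hortw b Hb), (Hortw yz Hyz). ring. }
      rewrite H1, H2.
      replace (ip m u d) with (s * ip m d d) by lra. ring.
Qed.


Definition mk (m : nat) (f : nat -> R) : point := map f (seq 0 m).

Lemma vec_mk m f k : (k < m)%nat -> vec (mk m f) k = f k.
Proof.
  intros Hk. unfold vec, mk. rewrite nth_indep with (d' := f 0%nat).
  - rewrite map_nth, seq_nth by auto. reflexivity.
  - rewrite length_map, length_seq. auto.
Qed.

Lemma aff_mk m S f : inA m S f -> aff m S (mk m f).
Proof.
  intros H. apply aff_inA. split.
  - unfold mk. rewrite length_map, length_seq. auto.
  - apply (inA_ext _ _ f); auto. intros. rewrite vec_mk; auto.
Qed.

Lemma dist_mk m p f : dist m p (mk m f) =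
  sqrt (ip m (fun k => vec p k - f k) (fun k => vec p k - f k)).
Proof.
  rewrite dist_ip. f_equal. apply ip_ext; intros; rewrite vec_mk; auto.
Qed.

Lemma inA_sub m T S : T <> nil -> S <> nil -> incl T S -> forall f, inA m T f -> inA m S f.
Proof.
  intros HT HS Hi. apply span_sub; auto.
  - intros f g Hf Hfg. eapply inA_ext; eauto.
  - intros. apply inA_aff; auto.
  - intros v Hv. apply inA_vert. auto.
Qed.

Lemma sqrt_sq_le x y : 0 <= x -> 0 <= y -> x * x <= y -> x <= sqrt y.
Proof.
  intros Hx Hy H. rewrite <- (sqrt_square x) by auto. apply sqrt_le_1; nra.
Qed.

Lemma le_sqrt_sq x y : 0 <= x -> 0 <= y -> x <= sqrt y -> x * x <= y.
Proof.
  intros Hx Hy H. pose proof (sqrt_sqrt y Hy). pose proof (sqrt_pos y). nra.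
Qed.

Lemma ip_lin_r m u w a e : ip m u (fun k => w k + a * e k) = ip m u w + a * ip m u e.
Proof.
  unfold ip. rewrite (rsum_ext _ _ (fun k => u k * w k + a * (u k * e k))) by (intros; ring).
  rewrite rsum_plus, rsum_scal. ring.
Qed.

Lemma core (m : nat) (T Sp Sq : list point) (p q : point)
  (HT : T <> nil) (HTp : incl T Sp) (Hqp : In q Sp) (HTq : incl T Sq) (Hpq : In p Sq)
  (HSq : forall v, In v Sq -> v = p \/ In v T) :
  dist_set m p (aff m Sp) * dist_set m q (aff m T) <=
  dist_set m q (aff m Sq) * dist_set m p (aff m T).
Proof.
  assert (HSp0 : Sp <> nil) by (intro; subst; contradiction).
  assert (HSq0 : Sq <> nil) by (intro; subst; contradiction).
  destruct (proj_ex m T HT (vec p)) as [yp [Hyp Hp]].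
  destruct (proj_ex m T HT (vec q)) as [yq [Hyq Hq]].
  set (p' := fun k => vec p k - yp k).
  set (q' := fun k => vec q k - yq k).
  set (Np := ip m p' p'). set (Nq := ip m q' q'). set (C := ip m p' q').
  assert (Hop : forall a a', inA m T a -> inA m T a' -> ip m p' (fun k => a k - a' k) = 0).
  { intros a a' Ha Ha'.
    rewrite (ip_ext m p' p' _ (fun k => (a k - yp k) - (a' k - yp k))) by (intros; ring).
    rewrite ip_sub_r. unfold p'. rewrite (Hp a Ha), (Hp a' Ha'). ring. }
  assert (Hoq : forall a a', inA m T a -> inA m T a' -> ip m q' (fun k => a k - a' k) = 0).
  { intros a a' Ha Ha'.
    rewrite (ip_ext m q' q' _ (fun k => (a k - yq k) - (a' k - yq k))) by (intros; ring).
    rewrite ip_sub_r. unfold q'. rewrite (Hq a Ha), (Hq a' Ha'). ring. }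
  assert (HNp : 0 <= Np) by apply ip_nonneg.
  assert (HNq : 0 <= Nq) by apply ip_nonneg.
  assert (S1 : dist_set m q (aff m T) <= sqrt Nq).
  { eapply Rle_trans. apply (dset_le m q _ (mk m yq)). apply aff_mk; auto.
    rewrite dist_mk. right. reflexivity. }
  assert (S2 : sqrt Np <= dist_set m p (aff m T)).
  { apply dset_ge. exists (mk m yp). apply aff_mk; auto.
    intros x Hx. apply aff_inA in Hx. destruct Hx as [_ Hx].
    rewrite dist_ip. apply sqrt_le_1; [auto|apply ip_nonneg|].
    rewrite (ip_ext m _ (fun k => p' k + 1 * (yp k - vec x k)) _ (fun k => p' k + 1 * (yp k - vec x k)))
      by (intros; unfold p'; ring).
    rewrite ip4. rewrite (ip_sym m (fun k => yp k - vec x k) p').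
    rewrite Hop by auto. pose proof (ip_nonneg m (fun k => yp k - vec x k)).
    fold Np. lra. }
  set (Dp := dist_set m p (aff m Sp)).
  set (Dq := dist_set m q (aff m Sq)).
  assert (HDp : 0 <= Dp).
  { apply dset_nonneg. exists (mk m (vec q)). apply aff_mk. apply inA_vert. auto. }
  assert (HDq : 0 <= Dq).
  { apply dset_nonneg. exists (mk m (vec p)). apply aff_mk. apply inA_vert. auto. }
  assert (Key : Dp * sqrt Nq <= Dq * sqrt Np).
  { destruct (Req_EM_T Nq 0) as [E0|E0].
    { rewrite E0, sqrt_0. pose proof (sqrt_pos Np). nra. }
    assert (HNq' : 0 < Nq) by lra.
    set (t := C / Nq).
    assert (S3 : Dp * Dp * Nq <= Np * Nq - C * C).
    { assert (Hx : inA m Sp (fun k => yp k + t * (vec q k - yq k))).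
      { apply inA_aff. apply (inA_sub m T); auto. apply inA_vert; auto.
        apply (inA_sub m T); auto. }
      assert (Hle : Dp <= sqrt (Np - 2 * t * C + t * t * Nq)).
      { eapply Rle_trans. apply (dset_le m p _ _ (aff_mk _ _ _ Hx)).
        rewrite dist_mk. apply sqrt_le_1.
        - apply ip_nonneg.
        - pose proof (ip_nonneg m (fun k => p' k + (- t) * q' k)).
          rewrite ip4 in H. rewrite (ip_sym m q' p') in H. fold Np Nq C in H. lra.
        - rewrite (ip_ext m _ (fun k => p' k + (- t) * q' k) _ (fun k => p' k + (- t) * q' k))
            by (intros; unfold p', q'; ring).
          rewrite ip4, (ip_sym m q' p'). fold Np Nq C. lra. }
      assert (Hz : 0 <= Np - 2 * t * C + t * t * Nq).
      { pose proof (ip_nonneg m (fun k => p' k + (- t) * q' k)).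
        rewrite ip4 in H. rewrite (ip_sym m q' p') in H. fold Np Nq C in H. lra. }
      pose proof (le_sqrt_sq _ _ HDp Hz Hle).
      assert (Ht : t * Nq = C) by (unfold t; field; auto).
      nra. }
    destruct (Req_EM_T Np 0) as [F0|F0].
    { assert (HC : C = 0).
      { unfold C. rewrite ip_sym. apply ip_zero_r. apply ip_self_zero. auto. }
      rewrite F0, HC in S3.
      assert (E1 : Dp * Dp * Nq <= 0) by lra.
      assert (E2 : Dp * Dp <= 0).
      { destruct (Rle_lt_dec (Dp * Dp) 0); auto.
        assert (0 < Dp * Dp * Nq) by (apply Rmult_lt_0_compat; auto). lra. }
      assert (Dp = 0) by nra. rewrite H. pose proof (sqrt_pos Np). nra. }
    assert (HNp' : 0 < Np) by lra.
    set (X := Dp * sqrt Nq).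
    assert (HX2 : X * X <= Np * Nq - C * C).
    { unfold X. pose proof (sqrt_sqrt Nq HNq). nra. }
    assert (HX : 0 <= X) by (unfold X; pose proof (sqrt_pos Nq); nra).
    assert (Hsp : 0 < sqrt Np) by (apply sqrt_lt_R0; auto).
    assert (Hsp2 : sqrt Np * sqrt Np = Np) by (apply sqrt_sqrt; lra).
    assert (HE : forall f, inA m Sq f -> exists b s, inA m T b /\
               forall k, (k < m)%nat -> f k = b k + s * p' k).
    { apply span_sub; auto.
      - intros f g [b [s [Hb Hf]]] Hfg. exists b, s. split; auto.
        intros k Hk. rewrite <- Hfg, Hf by auto. auto.
      - intros x y z s [b1 [s1 [Hb1 H1]]] [b2 [s2 [Hb2 H2]]] [b3 [s3 [Hb3 H3]]].
        exists (fun k => b1 k + s * (b2 k - b3 k)), (s1 + s * (s2 - s3)).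
        split. apply inA_aff; auto.
        intros k Hk. rewrite H1, H2, H3 by auto. ring.
      - intros v Hv. destruct (HSq v Hv) as [->|Hv'].
        + exists yp, 1. split; auto. intros; unfold p'; ring.
        + exists (vec v), 0. split. apply inA_vert; auto. intros; ring. }
    assert (Hlow : X / sqrt Np <= Dq).
    { apply dset_ge. exists (mk m (vec p)). apply aff_mk. apply inA_vert. auto.
      intros x Hx. apply aff_inA in Hx. destruct Hx as [_ Hx].
      destruct (HE _ Hx) as [b [s [Hb Hxb]]].
      rewrite dist_ip.
      set (w := fun k => q' k + (- s) * p' k).
      set (v := fun k => yq k - b k).
      assert (Hd : ip m (fun k => vec q k - vec x k) (fun k => vec q k - vec x k) =
                   ip m (fun k => w k + 1 * v k) (fun k => w k + 1 * v k)).
      { apply ip_ext; intros k Hk; pose proof (Hxb k Hk) as Hk'; unfold vec in Hk' |- *; rewrite Hk'; unfold w, v, q', vec; ring. }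
      assert (Hwv : ip m w v = 0).
      { unfold w. rewrite (ip_sym m (fun k => q' k + - s * p' k) v).
        rewrite ip_lin_r. rewrite !(ip_sym m v). unfold v.
        rewrite Hoq, Hop by auto. ring. }
      assert (Hww : ip m w w = Nq - 2 * s * C + s * s * Np).
      { unfold w. rewrite ip4. rewrite (ip_sym m q' p'). fold Np Nq C. ring. }
      pose proof (ip_nonneg m v).
      set (Z := ip m (fun k => vec q k - vec x k) (fun k => vec q k - vec x k)).
      assert (HZ : Np * Nq - C * C <= Z * Np).
      { unfold Z. rewrite Hd, ip4, (ip_sym m v w), Hwv, Hww.
        pose proof (pow2_ge_0 (s * Np - C)). pose proof (Rmult_le_pos _ _ H HNp). nra. }
      assert (HZ0 : 0 <= Z) by apply ip_nonneg.
      pose proof (sqrt_sqrt Z HZ0). pose proof (sqrt_pos Z).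
      apply (Rmult_le_reg_r (sqrt Np)); auto.
      unfold Rdiv. rewrite Rmult_assoc, Rinv_l by lra. rewrite Rmult_1_r.
      assert (HY : (sqrt Z * sqrt Np) * (sqrt Z * sqrt Np) >= X * X) by nra.
      assert (HY0 : 0 <= sqrt Z * sqrt Np) by (apply Rmult_le_pos; lra).
      destruct (Rle_lt_dec X (sqrt Z * sqrt Np)) as [HH|HH]; auto.
      assert ((sqrt Z * sqrt Np) * (sqrt Z * sqrt Np) < X * X).
      { apply Rle_lt_trans with ((sqrt Z * sqrt Np) * X). apply Rmult_le_compat_l; lra.
        apply Rmult_lt_compat_r; lra. }
      lra. }
    apply (Rmult_le_compat_r (sqrt Np)) in Hlow; [|lra].
    unfold Rdiv in Hlow. rewrite Rmult_assoc, Rinv_l in Hlow by lra. lra. }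
  pose proof (sqrt_pos Nq). pose proof (sqrt_pos Np).
  fold Dp Dq.
  apply Rle_trans with (Dp * sqrt Nq). apply Rmult_le_compat_l; auto.
  apply Rle_trans with (Dq * sqrt Np); auto. apply Rmult_le_compat_l; auto.
Qed.


Lemma NoDup_rem (l : list point) x : NoDup l -> NoDup (remove pt_eq_dec x l).
Proof.
  induction l as [|a l IH]; intros H; simpl; [constructor|].
  inversion H; subst. destruct (pt_eq_dec x a).
  - apply IH; auto.
  - constructor; auto. intro Hin. apply in_remove in Hin. tauto.
Qed.

Lemma length_rem (l : list point) x : NoDup l -> In x l ->
  length (remove pt_eq_dec x l) = pred (length l).
Proof.
  induction l as [|a l IH]; intros H Hx; [destruct Hx|].
  inversion H; subst. simpl. destruct (pt_eq_dec x a).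
  - subst. rewrite notin_remove; auto.
  - destruct Hx as [Hx|Hx]; [congruence|]. simpl. rewrite IH; auto.
    destruct l; [destruct Hx|]. simpl. auto.
Qed.

Lemma dist_sym m x y : dist m x y = dist m y x.
Proof. unfold dist. f_equal. apply rsum_ext. intros; ring. Qed.

Lemma dist_pos m x y : x <> y -> length x = m -> length y = m -> 0 < dist m x y.
Proof.
  intros Hxy Hx Hy. destruct (Rlt_dec 0 (dist m x y)) as [H|H]; auto.
  exfalso. apply Hxy.
  assert (H0 : dist m x y = 0) by (pose proof (dist_nonneg m x y); lra).
  unfold dist in H0. apply sqrt_eq_0 in H0.
  2: { apply rsum_nonneg. intros. apply pow2_ge_0. }
  apply (nth_ext x y 0 0). congruence.
  intros k Hk. pose proof (rsum_zero_each _ _ (fun k _ => pow2_ge_0 _) H0 k ltac:(lia)).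
  simpl in H1. nra.
Qed.

Lemma pd_in m s d : In d (pair_dists m s) <->
  exists x y, In x s /\ In y s /\ x <> y /\ d = dist m x y.
Proof.
  unfold pair_dists. rewrite in_map_iff. split.
  - intros [[x y] [Hd Hin]]. apply filter_In in Hin. destruct Hin as [Hin Hf].
    apply in_prod_iff in Hin. simpl in *. destruct (pt_eq_dec x y); [discriminate|].
    destruct Hin as [Hx Hy]. exists x, y. repeat split; auto.
  - intros [x [y [Hx [Hy [Hxy Hd]]]]]. exists (x, y). simpl. split; auto.
    apply filter_In. split. apply in_prod_iff; auto. simpl.
    destruct (pt_eq_dec x y); congruence.
Qed.

Lemma fold_max_ge a t x : In x (a :: t) -> x <= fold_right Rmax a t.
Proof.
  induction t as [|b t IH]; simpl; intros H.
  - destruct H as [->|[]]. lra.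
  - destruct H as [->|[->|H]].
    + eapply Rle_trans. apply IH; simpl; auto. apply Rmax_r.
    + apply Rmax_l.
    + eapply Rle_trans. apply IH; simpl; auto. apply Rmax_r.
Qed.

Lemma fold_max_in a t : In (fold_right Rmax a t) (a :: t).
Proof.
  induction t as [|b t IH]; simpl; auto.
  destruct (Rle_dec b (fold_right Rmax a t)).
  - rewrite Rmax_right by auto. simpl in IH. tauto.
  - rewrite Rmax_left by lra. auto.
Qed.

Lemma fold_min_le a t x : In x (a :: t) -> fold_right Rmin a t <= x.
Proof.
  induction t as [|b t IH]; simpl; intros H.
  - destruct H as [->|[]]. lra.
  - destruct H as [->|[->|H]].
    + eapply Rle_trans. apply Rmin_r. apply IH; simpl; auto.
    + apply Rmin_l.
    + eapply Rle_trans. apply Rmin_r. apply IH; simpl; auto.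
Qed.

Lemma fold_min_in a t : In (fold_right Rmin a t) (a :: t).
Proof.
  induction t as [|b t IH]; simpl; auto.
  destruct (Rle_dec b (fold_right Rmin a t)).
  - rewrite Rmin_left by auto. auto.
  - rewrite Rmin_right by lra. simpl in IH. tauto.
Qed.

Lemma Rmaxl_ge l x : In x l -> x <= Rmaxl l.
Proof. destruct l; [intros []|]. apply fold_max_ge. Qed.
Lemma Rmaxl_in l : l <> nil -> In (Rmaxl l) l.
Proof. destruct l; [congruence|]. intros; apply fold_max_in. Qed.
Lemma Rminl_le l x : In x l -> Rminl l <= x.
Proof. destruct l; [intros []|]. apply fold_min_le. Qed.
Lemma Rminl_in l : l <> nil -> In (Rminl l) l.
Proof. destruct l; [congruence|]. intros; apply fold_min_in. Qed.

Lemma Lmax_ge m s x y : In x s -> In y s -> x <> y -> dist m x y <= Lmax m s.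
Proof. intros. apply Rmaxl_ge. apply pd_in. eauto 7. Qed.

Lemma lmin_le m s x y : In x s -> In y s -> x <> y -> lmin m s <= dist m x y.
Proof. intros. apply Rminl_le. apply pd_in. eauto 7. Qed.

Lemma Lmax_att m s x y : In x s -> In y s -> x <> y ->
  exists a b, In a s /\ In b s /\ a <> b /\ Lmax m s = dist m a b.
Proof.
  intros. apply pd_in. apply Rmaxl_in. intro H2.
  assert (In (dist m x y) (pair_dists m s)) by (apply pd_in; eauto 7).
  rewrite H2 in H3. destruct H3.
Qed.

Lemma lmin_att m s x y : In x s -> In y s -> x <> y ->
  exists a b, In a s /\ In b s /\ a <> b /\ lmin m s = dist m a b.
Proof.
  intros. apply pd_in. apply Rminl_in. intro H2.
  assert (In (dist m x y) (pair_dists m s)) by (apply pd_in; eauto 7).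
  rewrite H2 in H3. destruct H3.
Qed.

Lemma dset_mono m p (E E' : point -> Prop) : (exists x, E' x) -> (forall x, E' x -> E x) ->
  dist_set m p E <= dist_set m p E'.
Proof.
  intros Hne Hs. apply dset_ge; auto. intros x Hx. apply dset_le. auto.
Qed.

Lemma aff_single m y z : length y = m -> aff m [y] z -> z = y.
Proof.
  intros Hy Hz. apply aff_inA in Hz. destruct Hz as [Hl [c [Hc1 Hc2]]].
  simpl length in Hc1, Hc2. rewrite rsum_S, rsum_0 in Hc1.
  apply (nth_ext z y 0 0). congruence.
  intros k Hk. pose proof (Hc2 k ltac:(lia)). unfold vec in H.
  rewrite rsum_S, rsum_0 in H. simpl in H. rewrite H. replace (c O) with 1 by lra. ring.
Qed.


Lemma two_elems (s : list point) x : NoDup s -> (2 <= length s)%nat -> In x s ->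
  exists y, In y s /\ y <> x.
Proof.
  intros Hnd Hl Hx. pose proof (length_rem s x Hnd Hx).
  destruct (remove pt_eq_dec x s) as [|y r] eqn:E; simpl in H; [lia|].
  exists y. assert (In y (remove pt_eq_dec x s)) by (rewrite E; simpl; auto).
  apply in_remove in H0. tauto.
Qed.

Lemma INR_le_pow2 j : INR (S j) <= 2 ^ j.
Proof.
  induction j. simpl; lra.
  rewrite S_INR. simpl (2 ^ S j). pose proof (pow_R1_Rle 2 j ltac:(lra)). lra.
Qed.

Lemma pow_half j g : 0 < g -> g <= 1/2 -> INR (S j) * g ^ j <= 1.
Proof.
  intros Hg Hg2.
  assert (g ^ j <= (1/2) ^ j) by (apply pow_incr; lra).
  pose proof (INR_le_pow2 j).
  assert (H2 : 2 ^ j * (1/2) ^ j = 1) by (rewrite <- Rpow_mult_distr; replace (2 * (1/2)) with 1 by field; apply pow1).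
  pose proof (pow_le g j ltac:(lra)). pose proof (pos_INR (S j)).
  pose proof (pow_le (1/2) j ltac:(lra)).
  apply Rle_trans with (2 ^ j * (1/2)^j); [|lra].
  apply Rmult_le_compat; auto.
Qed.

Lemma lt_div a b l : 0 < l -> a * l < b -> a < b / l.
Proof.
  intros Hl H. apply (Rmult_lt_reg_r l); auto. unfold Rdiv.
  rewrite Rmult_assoc, Rinv_l, Rmult_1_r by lra. auto.
Qed.

Theorem mainTheorem5 (m : nat) (G0 : R) (tau : list point)
  (hG0 : 0 < G0 <= 1)
  (hsimp : simplex m tau)
  (hflake : flake m G0 tau) :
  forall p, In p tau ->
    altitude m p tau < 2 * (Lmax m tau) ^ 2 * G0 / lmin m tau.
Proof.
  intros p Hp. destruct hsimp as [Hne [Hnd Hlen]].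
  assert (Hl : forall v, In v tau -> length v = m) by (rewrite <- Forall_forall; auto).
  destruct hflake as [Hbad Hprop].
  unfold bad, good in Hbad. apply not_all_ex_not in Hbad. destruct Hbad as [t Ht].
  apply imply_to_and in Ht. destruct Ht as [[Htne [Htnd Htinc]] Htk].
  apply Rnot_ge_lt in Htk.
  assert (Hlt : length t = length tau).
  { pose proof (NoDup_incl_length Htnd Htinc).
    destruct (Nat.eq_dec (length t) (length tau)); auto.
    exfalso. assert (Hg : good m G0 t) by (apply Hprop; [split; auto|lia]).
    specialize (Hg t (conj Htne (conj Htnd (incl_refl t)))). lra. }
  assert (Hinc2 : incl tau t) by (apply NoDup_length_incl; auto; lia).
  assert (Hlt' : forall v, In v t -> length v = m) by (intros; apply Hl; auto).
  assert (H2 : (2 <= length t)%nat).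
  { destruct (Compare_dec.le_lt_dec 2 (length t)); auto. exfalso.
    unfold thickness in Htk.
    assert (sdim t = 0%nat) by (unfold sdim; lia). rewrite H in Htk. simpl in Htk. lra. }
  assert (H3 : (3 <= length t)%nat).
  { destruct (Nat.eq_dec (length t) 2); [|lia]. exfalso.
    destruct t as [|x [|y [|z r]]]; simpl in e; try lia.
    assert (Hxy : x <> y) by (intro; subst; inversion Htnd; subst; simpl in *; tauto).
    assert (Hx : length x = m) by (apply Hlt'; simpl; auto).
    assert (Hy : length y = m) by (apply Hlt'; simpl; auto).
    pose proof (dist_pos m x y Hxy Hx Hy) as Hd.
    assert (HL : Lmax m [x; y] = dist m x y).
    { destruct (Lmax_att m [x;y] x y) as [a [b [Ha [Hb [Hab E]]]]]; simpl; auto.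
      rewrite E. simpl in Ha, Hb.
      destruct Ha as [<-|[<-|[]]]; destruct Hb as [<-|[<-|[]]]; try congruence.
      apply dist_sym. }
    assert (Hmin : dist m x y <= Rminl (map (fun v => altitude m v [x; y]) [x; y])).
    { assert (Hin := Rminl_in (map (fun v => altitude m v [x; y]) [x; y]) ltac:(discriminate)).
      apply in_map_iff in Hin. destruct Hin as [v [Hv Hvin]]. rewrite <- Hv.
      unfold altitude, drop_vertex. simpl in Hvin.
      destruct Hvin as [<-|[<-|[]]].
      - simpl. destruct (pt_eq_dec x x); [|congruence]. destruct (pt_eq_dec x y); [congruence|].
        apply dset_ge. exists y. apply aff_inA. split; auto. apply inA_vert; simpl; auto.
        intros z Hz. apply aff_single in Hz; auto. subst. lra.
      - simpl. destruct (pt_eq_dec y x); [congruence|]. destruct (pt_eq_dec y y); [|congruence].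
        apply dset_ge. exists x. apply aff_inA. split; auto. apply inA_vert; simpl; auto.
        intros z Hz. apply aff_single in Hz; auto. subst. rewrite dist_sym. lra. }
    unfold thickness in Htk. simpl in Htk. rewrite HL in Htk.
    change (Rminl (map (fun v => altitude m v [x; y]) [x; y])) with
      (Rmin (altitude m y [x; y]) (altitude m x [x; y])) in Hmin.
    assert (1 <= Rmin (altitude m y [x; y]) (altitude m x [x; y]) / (1 * dist m x y)).
    { rewrite Rmult_1_l. apply (Rmult_le_reg_r (dist m x y)); auto. unfold Rdiv.
      rewrite Rmult_assoc, Rinv_l, Rmult_1_r by lra. lra. }
    lra. }
  set (n := length tau) in *.
  destruct n as [|[|[|j]]] eqn:En; try lia.
  set (J := S j) in *.
  assert (Hsd : sdim t = S J) by (unfold sdim; lia).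
  set (L := Lmax m tau). set (l := lmin m tau).
  destruct (two_elems tau p Hnd ltac:(lia) Hp) as [s0 [Hs0 Hs0p]].
  assert (Hlpos : 0 < l).
  { destruct (lmin_att m tau s0 p Hs0 Hp Hs0p) as [a [b [Ha [Hb [Hab E]]]]].
    unfold l. rewrite E. apply dist_pos; auto. }
  assert (HlL : l <= L).
  { unfold l, L. eapply Rle_trans. apply (lmin_le m tau s0 p); auto.
    apply Lmax_ge; auto. }
  assert (Hq : exists q, In q tau /\ altitude m q tau < INR (S J) * (G0 * G0 ^ J) * L).
  { unfold thickness in Htk. rewrite Hsd in Htk. simpl Nat.eqb in Htk. cbv iota in Htk.
    assert (Hin := Rminl_in (map (fun v => altitude m v t) t) ltac:(destruct t; [congruence|discriminate])).
    apply in_map_iff in Hin. destruct Hin as [q [Hqv Hqt]].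
    rewrite <- Hqv in Htk.
    destruct (two_elems t q Htnd ltac:(lia) Hqt) as [y [Hy Hyq]].
    assert (HLt : 0 < Lmax m t).
    { eapply Rlt_le_trans. apply (dist_pos m y q); auto. apply Lmax_ge; auto. }
    assert (HLtL : Lmax m t <= L).
    { destruct (Lmax_att m t y q Hy Hqt Hyq) as [a [b [Ha [Hb [Hab E]]]]].
      rewrite E. apply Lmax_ge; auto. }
    assert (Hpos : 0 < INR (S J) * Lmax m t) by (apply Rmult_lt_0_compat; auto; apply lt_0_INR; lia).
    assert (Hat : altitude m q t < G0 ^ S J * (INR (S J) * Lmax m t)).
    { apply (Rmult_lt_reg_r (/ (INR (S J) * Lmax m t))). apply Rinv_0_lt_compat; auto.
      rewrite Rmult_assoc, Rinv_r, Rmult_1_r by lra. exact Htk. }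
    assert (Hmono : altitude m q tau <= altitude m q t).
    { unfold altitude, drop_vertex. apply dset_mono.
      - exists y. apply aff_inA. split; auto. apply inA_vert. apply in_in_remove; auto.
      - intros z Hz. apply aff_inA in Hz. apply aff_inA. destruct Hz as [Hz1 Hz2]. split; auto.
        apply (inA_sub m (remove pt_eq_dec q t)); auto.
        + intro E. assert (In y (remove pt_eq_dec q t)) by (apply in_in_remove; auto). rewrite E in H; auto.
        + intro E. assert (In y (remove pt_eq_dec q tau)) by (apply in_in_remove; auto). rewrite E in H; auto.
        + apply remove_incl. auto. }
    exists q. split; auto.
    assert (0 <= G0 ^ S J) by (apply pow_le; lra).
    assert (G0 ^ S J * (INR (S J) * Lmax m t) <= G0 ^ S J * (INR (S J) * L)).
    { apply Rmult_le_compat_l; auto. apply Rmult_le_compat_l; auto. apply pos_INR. }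
    replace (INR (S J) * (G0 * G0 ^ J) * L) with (G0 ^ S J * (INR (S J) * L)) by (simpl; ring).
    lra. }
  destruct Hq as [q [Hqin Hqalt]].
  assert (HDp0 : 0 <= altitude m p tau).
  { apply dset_nonneg. exists s0. apply aff_inA. split; auto. apply inA_vert. apply in_in_remove; auto. }
  assert (HDpL : altitude m p tau <= L).
  { eapply Rle_trans. apply (dset_le m p _ s0). apply aff_inA. split; auto. apply inA_vert.
    apply in_in_remove; auto. unfold L. apply Lmax_ge; auto. }
  apply lt_div; auto.
  assert (HG1 : 0 < G0 ^ J) by (apply pow_lt; lra).
  assert (HJ : 1 <= INR J) by (unfold J; rewrite S_INR; pose proof (pos_INR j); lra).
  rewrite S_INR in Hqalt.
  destruct (Rle_dec G0 (1/2)) as [Hg|Hg].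
  2: { assert (0 < L) by lra.
       assert (altitude m p tau * l <= L * L).
       { apply Rle_trans with (L * l). apply Rmult_le_compat_r; lra. apply Rmult_le_compat_l; lra. }
       assert (L * L < 2 * L ^ 2 * G0).
       { simpl. assert (0 < L * L) by nra. nra. }
       lra. }
  destruct (pt_eq_dec p q) as [<-|Hpq].
  { pose proof (pow_half J G0 ltac:(lra) Hg). rewrite S_INR in H.
    assert (0 < L) by lra.
    assert (E1 : (INR J + 1) * (G0 * G0 ^ J) * L = (G0 * L) * ((INR J + 1) * G0 ^ J)) by ring.
    assert ((G0 * L) * ((INR J + 1) * G0 ^ J) <= G0 * L * 1).
    { apply Rmult_le_compat_l; auto. nra. }
    assert (Ha : altitude m p tau < G0 * L) by lra.
    assert (altitude m p tau * l < G0 * L * l) by (apply Rmult_lt_compat_r; auto).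
    assert (G0 * L * l <= G0 * L * L) by (apply Rmult_le_compat_l; nra).
    assert (0 < G0 * L * L) by (apply Rmult_lt_0_compat; nra).
    simpl. lra. }
  set (Sp := remove pt_eq_dec p tau). set (Sq := remove pt_eq_dec q tau).
  set (T := remove pt_eq_dec p Sq).
  assert (HlSp : length Sp = S J) by (unfold Sp; rewrite length_rem; auto; lia).
  assert (HlSq : length Sq = S J) by (unfold Sq; rewrite length_rem; auto; lia).
  assert (HpSq : In p Sq) by (apply in_in_remove; auto).
  assert (HqSp : In q Sp) by (apply in_in_remove; auto).
  assert (HlT : length T = J) by (unfold T; rewrite length_rem; auto; [lia|apply NoDup_rem; auto]).
  destruct T as [|s1 T'] eqn:ET; [simpl in HlT; unfold J in HlT; lia|].
  assert (Hs1 : In s1 T) by (rewrite ET; simpl; auto).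
  rewrite <- ET in *.
  assert (Hs1' : In s1 tau /\ s1 <> p /\ s1 <> q).
  { unfold T, Sq in Hs1. apply in_remove in Hs1. destruct Hs1 as [Hs1 Hn].
    apply in_remove in Hs1. tauto. }
  destruct Hs1' as [Hs1t [Hs1p Hs1q]].
  assert (HTne : T <> nil) by (rewrite ET; discriminate).
  assert (Hcore : altitude m p tau * altitude m q Sp <= altitude m q tau * altitude m p Sq).
  { assert (E1 : altitude m q Sp = dist_set m q (aff m T)).
    { unfold altitude, drop_vertex, Sp, T, Sq. rewrite remove_remove_comm. reflexivity. }
    rewrite E1. unfold altitude at 1 3.
    apply (core m T Sp Sq p q); auto.
    - intros v Hv. unfold T, Sq in Hv. apply in_remove in Hv. destruct Hv as [Hv Hn].
      apply in_remove in Hv. apply in_in_remove; tauto.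
    - intros v Hv. unfold T in Hv. apply in_remove in Hv. tauto.
    - intros v Hv. destruct (pt_eq_dec v p); auto. right. apply in_in_remove; auto. }
  assert (HSpnd : NoDup Sp) by (apply NoDup_rem; auto).
  assert (HSpne : Sp <> nil) by (intro E; rewrite E in HlSp; simpl in HlSp; lia).
  assert (Hgood : good m G0 Sp).
  { apply Hprop.
    - split; auto. split; auto. intros v Hv. apply in_remove in Hv. tauto.
    - lia. }
  assert (Hth := Hgood Sp (conj HSpne (conj HSpnd (incl_refl _)))).
  assert (HsdSp : sdim Sp = J) by (unfold sdim; lia).
  unfold thickness in Hth. rewrite HsdSp in Hth. unfold J in Hth. simpl Nat.eqb in Hth. cbv iota in Hth.
  fold J in Hth.
  assert (HLp : l <= Lmax m Sp).
  { assert (Hs1Sp : In s1 Sp) by (apply in_in_remove; auto).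
    eapply Rle_trans. apply (lmin_le m tau q s1); auto.
    apply Lmax_ge; auto. }
  assert (HminSp : Rminl (map (fun v => altitude m v Sp) Sp) <= altitude m q Sp).
  { apply Rminl_le. apply in_map_iff. exists q. auto. }
  assert (Hden : 0 < INR J * Lmax m Sp) by (apply Rmult_lt_0_compat; lra).
  assert (Ha : G0 ^ J * (INR J * Lmax m Sp) <= altitude m q Sp).
  { apply Rle_trans with (Rminl (map (fun v => altitude m v Sp) Sp)); auto.
    apply (Rmult_le_reg_r (/ (INR J * Lmax m Sp))). apply Rinv_0_lt_compat; auto.
    rewrite Rmult_assoc, Rinv_r, Rmult_1_r by lra. apply Rge_le. exact Hth. }
  assert (Hb : altitude m p Sq <= L).
  { eapply Rle_trans. apply (dset_le m p _ s1). apply aff_inA. split; auto. apply inA_vert. auto.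
    apply Lmax_ge; auto. }
  assert (Hb0 : 0 <= altitude m p Sq).
  { apply dset_nonneg. exists s1. apply aff_inA. split; auto. apply inA_vert. auto. }
  assert (Hd0 : 0 <= altitude m q tau).
  { apply dset_nonneg. exists p. apply aff_inA. split; auto. apply inA_vert. apply in_in_remove; auto. }
  set (D := altitude m p tau) in *. set (a := altitude m q Sp) in *.
  set (b := altitude m p Sq) in *. set (d := altitude m q tau) in *.
  set (G1 := G0 ^ J) in *.
  assert (0 < L) by lra.
  assert (C1 : D * (G1 * (INR J * l)) <= D * a).
  { apply Rmult_le_compat_l; auto. eapply Rle_trans; [|exact Ha].
    apply Rmult_le_compat_l. lra. apply Rmult_le_compat_l; lra. }
  assert (C2 : d * b <= d * L) by (apply Rmult_le_compat_l; auto).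
  assert (C3 : d * L < (INR J + 1) * (G0 * G1) * L * L) by (apply Rmult_lt_compat_r; auto).
  assert (C4 : G1 * (D * INR J * l) < G1 * ((INR J + 1) * G0 * L * L)).
  { replace (G1 * (D * INR J * l)) with (D * (G1 * (INR J * l))) by ring.
    replace (G1 * ((INR J + 1) * G0 * L * L)) with ((INR J + 1) * (G0 * G1) * L * L) by ring.
    lra. }
  apply Rmult_lt_reg_l in C4; auto.
  assert (C5 : (INR J + 1) * G0 * L * L <= INR J * (2 * L ^ 2 * G0)).
  { assert (HP : 0 <= G0 * L * L) by (apply Rmult_le_pos; [apply Rmult_le_pos|]; lra).
    assert (0 <= (INR J - 1) * (G0 * L * L)) by (apply Rmult_le_pos; lra).
    replace ((INR J + 1) * G0 * L * L) with ((INR J + 1) * (G0 * L * L)) by ring.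
    replace (INR J * (2 * L ^ 2 * G0)) with (2 * INR J * (G0 * L * L)) by ring.
    lra. }
  assert (C6 : INR J * (D * l) < INR J * (2 * L ^ 2 * G0)).
  { replace (INR J * (D * l)) with (D * INR J * l) by ring. lra. }
  apply Rmult_lt_reg_l in C6; lra.
Qed.
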